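(* Let $(C_*,\partial_C,\ell_C)$ and $(D_*,\partial_D,\ell_D)$ be ascending chain complexes over a field $\kappa$ such that each $C_k$ admits an $\ell_C$-orthogonal basis, each $D_k$ admits an $\ell_D$-orthogonal basis, and $C_k=D_k=0$ for all $k<0$. Then every filtered quasi-isomorphism $f\colon C_*\to D_*$ is a filtered homotopy equivalence.
   Context: An ascending chain complex over $\kappa$ is a triple $(C_*,\partial,\ell)$ where $(C_*=\bigoplus_{k\in\mathbb{Z}}C_k,\partial)$ is a chain complex of $\kappa$-vector spaces and $\ell\colon C_*\to\mathbb{R}\cup\{-\infty\}$ satisfies: $\ell(x)=-\infty$ iff $x=0$; $\ell(\sum_i c_ix_i)\le\max\{\ell(x_i): c_i\neq 0\}$, with equality if the $x_i$ lie in pairwise distinct degrees; and $\ell(\partial x)\le\ell(x)$. A subset $S$ of nonzero vectors is $\ell$-orthogonal if $\ell(\sum c_iv_i)=\max\{\ell(v_i):c_i\ne0\}$ for all finitely many distinct $v_i\in S$ and $c_i\in\kappa$. A filtered chain map $f\colon C_*\to D_*$ is a chain map with $\ell_D\circ f\le\ell_C$; it is a filtered quasi-isomorphism if for each $k\in\mathbb{Z}$ and $t\in\mathbb{R}$ the induced map $H_k(C^{\le t}_* )\to H_k(D^{\le t}_* )$ is an isomorphism, where $C^{\le t}_*=\{c:\ell_C(c)\le t\}$. A filtered homotopy equivalence is a filtered chain map $f$ for which there exist a filtered chain map $g\colon D_*\to C_*$ and maps $K^C\colon C_*\to C_{*+1}$, $K^D\colon D_*\to D_{*+1}$ with $\ell_C\circ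 K^C\le\ell_C$, $\ell_D\circ K^D\le\ell_D$, $\partial_CK^C+K^C\partial_C=1-gf$, $\partial_DK^D+K^D\partial_D=1-fg$. *)

(* Defs.v *)
From HB Require Import structures.
From mathcomp Require Import all_boot all_order all_algebra.
From mathcomp Require Import reals constructive_ereal.

Set Implicit Arguments.
Unset Strict Implicit.
Unset Printing Implicit Defensive.

Import Order.TTheory GRing.Theory Num.Theory.
Local Open Scope ring_scope.

Definition emax_over (R : realType) (n : nat) (P : pred 'I_n)
    (a : 'I_n -> \bar R) : \bar R :=
  \big[Order.max/-oo%E]_(i < n | P i) a i.

(* Axioms of the filtration function restricted to one degree:
   values in R u {-oo}, -oo exactly at 0, and the ultrametric inequality
   for finite linear combinations. *)
Definition filtration_axioms (kappa : fieldType) (R : realType)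
    (V : lmodType kappa) (l : V -> \bar R) : Prop :=
  [/\ (forall x : V, l x = -oo%E <-> x = 0),
      (forall x : V, l x <> +oo%E) &
      (forall (n : nat) (c : 'I_n -> kappa) (x : 'I_n -> V),
         (l (\sum_(i < n) c i *: x i)%R <= emax_over (fun i => (c i != 0)%R)
                                            (fun i => l (x i)))%E)].

(* An ascending chain complex, encoded degreewise: C_k = obj k,
   the differential C_{k+1} -> C_k is bd k, and ell on C_k is filt k. *)
Unset Implicit Arguments.
Record ascending_complex (kappa : fieldType) (R : realType) := AscComplex {
  obj : int -> lmodType kappa;
  bd : forall k : int, {linear obj (k + 1) -> obj k};
  filt : forall k : int, obj k -> \bar R;
  bd_bd : forall (k : int) (x : obj (k + 1 + 1)), bd k (bd (k + 1) x) = 0;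
  filt_ax : forall k : int, filtration_axioms (filt k);
  filt_bd : forall (k : int) (x : obj (k + 1)), (filt k (bd k x) <= filt (k + 1) x)%E
}.
Set Implicit Arguments.
Arguments obj {kappa R} a k.
Arguments bd {kappa R} a k.
Arguments filt {kappa R} a k.

Definition l_orthogonal (kappa : fieldType) (R : realType) (V : lmodType kappa)
    (l : V -> \bar R) (S : V -> Prop) : Prop :=
  (forall v, S v -> v <> 0) /\
  (forall (n : nat) (s : 'I_n -> V) (c : 'I_n -> kappa),
     injective s -> (forall i, S (s i)) ->
     l (\sum_(i < n) c i *: s i) = emax_over (fun i => c i != 0) (fun i => l (s i))).

Definition is_basis (kappa : fieldType) (V : lmodType kappa) (S : V -> Prop) : Prop :=
  (forall v : V, exists n (s : 'I_n -> V) (c : 'I_n -> kappa),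
      (forall i, S (s i)) /\ v = \sum_(i < n) c i *: s i) /\
  (forall (n : nat) (s : 'I_n -> V) (c : 'I_n -> kappa),
      injective s -> (forall i, S (s i)) ->
      \sum_(i < n) c i *: s i = 0 -> forall i, c i = 0).

Definition has_orthogonal_basis (kappa : fieldType) (R : realType)
    (V : lmodType kappa) (l : V -> \bar R) : Prop :=
  exists S : V -> Prop, is_basis S /\ l_orthogonal l S.

Definition filtered_chain_map (kappa : fieldType) (R : realType)
    (C D : ascending_complex kappa R)
    (f : forall k : int, {linear obj C k -> obj D k}) : Prop :=
  (forall (k : int) (x : obj C (k + 1)), f k (bd C k x) = bd D k (f (k + 1) x)) /\
  (forall (k : int) (x : obj C k), (filt D k (f k x) <= filt C k x)%E).

(* The induced map H_{k+1}(C^{<=t}) -> H_{k+1}(D^{<=t}) is bijective,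
   for every k : int (hence every degree) and every t : R. *)
Definition filtered_quasi_iso (kappa : fieldType) (R : realType)
    (C D : ascending_complex kappa R)
    (f : forall k : int, {linear obj C k -> obj D k}) : Prop :=
  forall (k : int) (t : R),
    (* surjectivity *)
    (forall y : obj D (k + 1),
       (filt D (k + 1) y <= t%:E)%E -> bd D k y = 0 ->
       exists x : obj C (k + 1),
         [/\ (filt C (k + 1) x <= t%:E)%E, bd C k x = 0 &
             exists z : obj D (k + 1 + 1),
               (filt D (k + 1 + 1) z <= t%:E)%E /\ y - f (k + 1) x = bd D (k + 1) z]) /\
    (* injectivity *)
    (forall x : obj C (k + 1),
       (filt C (k + 1) x <= t%:E)%E -> bd C k x = 0 ->
       (exists z : obj D (k + 1 + 1),
          (filt D (k + 1 + 1) z <= t%:E)%E /\ f (k + 1) x = bd D (k + 1) z) ->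
       exists w : obj C (k + 1 + 1),
         (filt C (k + 1 + 1) w <= t%:E)%E /\ x = bd C (k + 1) w).

Definition filtered_homotopy_equiv (kappa : fieldType) (R : realType)
    (C D : ascending_complex kappa R)
    (f : forall k : int, {linear obj C k -> obj D k}) : Prop :=
  filtered_chain_map f /\
  exists g : forall k : int, {linear obj D k -> obj C k},
  exists KC : forall k : int, {linear obj C k -> obj C (k + 1)},
  exists KD : forall k : int, {linear obj D k -> obj D (k + 1)},
  [/\ filtered_chain_map g,
      (forall (k : int) (x : obj C k), (filt C (k + 1) (KC k x) <= filt C k x)%E),
      (forall (k : int) (x : obj D k), (filt D (k + 1) (KD k x) <= filt D k x)%E),
      (forall (k : int) (x : obj C (k + 1)),
         bd C (k + 1) (KC (k + 1) x) + KC k (bd C k x) = x - g (k + 1) (f (k + 1) x)) &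
      (forall (k : int) (y : obj D (k + 1)),
         bd D (k + 1) (KD (k + 1) y) + KD k (bd D k y) = y - f (k + 1) (g (k + 1) y))].

(* Main.v *)
Require Import Defs.
From HB Require Import structures.
From mathcomp Require Import all_boot all_order all_algebra.
From mathcomp Require Import reals constructive_ereal.
From Stdlib Require Import ClassicalEpsilon.
From mathcomp Require Import zify.
Import Order.TTheory GRing.Theory Num.Theory.
Local Open Scope ring_scope.
Set Implicit Arguments.
Unset Strict Implicit.
Section Gen.
Variables (K : fieldType) (R : realType).

Definition lin (U V : lmodType K) (f : U -> V) :=
  forall a x y, f (a *: x + y) = a *: f x + f y.

Lemma lin0 (U V : lmodType K) (f : U -> V) : lin f -> f 0 = 0.
Proof.
move=> H; have e := H 1 0 0; rewrite !scale1r addr0 in e.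
by apply: (addrI (f 0)); rewrite addr0 -e.
Qed.

Lemma linD (U V : lmodType K) (f : U -> V) : lin f -> forall x y, f (x + y) = f x + f y.
Proof. by move=> H x y; have := H 1 x y; rewrite !scale1r. Qed.

Lemma linZ (U V : lmodType K) (f : U -> V) : lin f -> forall a x, f (a *: x) = a *: f x.
Proof. by move=> H a x; have := H a x 0; rewrite !addr0 (lin0 H) addr0. Qed.

Lemma linN (U V : lmodType K) (f : U -> V) : lin f -> forall x, f (- x) = - f x.
Proof. by move=> H x; rewrite -scaleN1r (linZ H) scaleN1r. Qed.

Lemma linB (U V : lmodType K) (f : U -> V) : lin f -> forall x y, f (x - y) = f x - f y.
Proof. by move=> H x y; rewrite (linD H) (linN H). Qed.

Lemma lin_sum (U V : lmodType K) (f : U -> V) (I : Type) (r : seq I) (F : I -> U) :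
  lin f -> f (\sum_(i <- r) F i) = \sum_(i <- r) f (F i).
Proof.
move=> H; elim: r => [|a r IH]; first by rewrite !big_nil (lin0 H).
by rewrite !big_cons (linD H) IH.
Qed.

Lemma lin_linear (U V : lmodType K) (f : {linear U -> V}) : lin f.
Proof. by move=> a x y; rewrite linearP. Qed.

Definition mklin (U V : lmodType K) (f : U -> V) (H : lin f) : {linear U -> V} :=
  HB.pack f (GRing.isLinear.Build K U V *:%R f H).

Definition ultra (W : lmodType K) (l : W -> \bar R) :=
  [/\ l 0 = -oo%E, forall a b : W, (l (a + b)%R <= maxe (l a) (l b))%E &
      forall (c : K) (a : W), (l (c *: a)%R <= l a)%E].

Lemma ultra_filt (W : lmodType K) (l : W -> \bar R) : filtration_axioms l -> ultra l.
Proof.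
case=> H1 H2 H3; split.
- by apply/H1.
- move=> a b.
  have := H3 2 (fun _ => 1) (fun i : 'I_2 => if val i == 0%N then a else b).
  rewrite /emax_over big_mkcond !big_ord_recl !big_ord0 /= !oner_neq0 !scale1r addr0.
  by rewrite !big_ord_recl !big_ord0 /= maxeNy.
- move=> c a; case: (eqVneq c 0) => [->|nz].
    by rewrite scale0r (proj2 (H1 0) erefl) leNye.
  have := H3 1 (fun _ => c) (fun _ => a).
  by rewrite /emax_over big_ord1 big_mkcond big_ord1 nz.
Qed.
End Gen.
Section Ultra.
Variables (K : fieldType) (R : realType).

Lemma ultraN (W : lmodType K) (l : W -> \bar R) : ultra l -> forall a, (l (- a)%R <= l a)%E.
Proof. by case=> _ _ H a; rewrite -scaleN1r. Qed.

Lemma ultra0 (W : lmodType K) (l : W -> \bar R) : ultra l -> l 0 = -oo%E.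
Proof. by case. Qed.

Lemma ultra_sum (W : lmodType K) (l : W -> \bar R) (I : eqType) (r : seq I)
    (c : I -> K) (x : I -> W) (t : \bar R) :
  ultra l -> (forall i, i \in r -> c i != 0 -> (l (x i) <= t)%E) ->
  (l (\sum_(i <- r) c i *: x i)%R <= t)%E.
Proof.
case=> H0 Hd Hs; elim: r => [|a r IH] Ht; first by rewrite big_nil H0 leNye.
rewrite big_cons; apply: le_trans (Hd _ _) _; rewrite ge_max; apply/andP; split.
- case: (eqVneq (c a) 0) => [->|nz]; first by rewrite scale0r H0 leNye.
  by apply: le_trans (Hs _ _) (Ht _ _ nz); rewrite mem_head.
- by apply: IH => i ir; apply: Ht; rewrite in_cons ir orbT.
Qed.

Lemma emax_ge n (P : pred 'I_n) (a : 'I_n -> \bar R) j : P j -> (a j <= emax_over P a)%E.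
Proof. by move=> Pj; rewrite /emax_over (bigD1 j) //= le_max lexx. Qed.

Definition liftable (V : lmodType K) (lV : V -> \bar R) : Prop :=
  forall (W Z : lmodType K) (lW : W -> \bar R) (p : W -> Z) (phi : V -> Z),
    ultra lW -> lin p -> lin phi ->
    (forall v, exists w, p w = phi v /\ (lW w <= lV v)%E) ->
    exists psi : V -> W, lin psi /\
      forall v, p (psi v) = phi v /\ (lW (psi v) <= lV v)%E.
End Ultra.

Section Basis.
Variables (K : fieldType) (R : realType) (V : lmodType K) (lV : V -> \bar R) (S : V -> Prop).
Hypotheses (hB : is_basis S) (hO : l_orthogonal lV S).

Definition sumW (W : lmodType K) (w : V -> W) (r : seq (K * V)) : W :=
  \sum_(p <- r) p.1 *: w p.2.
Definition allS (r : seq (K * V)) := forall p, p \in r -> S p.2.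
Definition scl (a : K) (r : seq (K * V)) := [seq (a * p.1, p.2) | p <- r].

Lemma sumW_cat (W : lmodType K) (w : V -> W) r1 r2 : sumW w (r1 ++ r2) = sumW w r1 + sumW w r2.
Proof. by rewrite /sumW big_cat. Qed.

Lemma sumW_scl (W : lmodType K) (w : V -> W) a r : sumW w (scl a r) = a *: sumW w r.
Proof.
by rewrite /sumW big_map scaler_sumr; apply: eq_bigr => p _; rewrite scalerA.
Qed.

Lemma allS_cat r1 r2 : allS r1 -> allS r2 -> allS (r1 ++ r2).
Proof. by move=> h1 h2 p; rewrite mem_cat => /orP [/h1|/h2]. Qed.

Lemma allS_scl a r : allS r -> allS (scl a r).
Proof. by move=> h p /mapP [q qr ->]; exact: (h q qr). Qed.

Lemma rep_ex v : exists r, allS r /\ v = sumW id r.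
Proof.
have [n [s [c [Hs ->]]]] := proj1 hB v.
exists [seq (c i, s i) | i <- index_enum 'I_n]; split.
  by move=> p /mapP [i _ ->]; apply: Hs.
by rewrite /sumW big_map.
Qed.

Definition coef (r : seq (K * V)) v := \sum_(p <- r | p.2 == v) p.1.
Definition comp (r : seq (K * V)) := [seq (coef r v, v) | v <- undup [seq p.2 | p <- r]].

Lemma comp_sum (W : lmodType K) (w : V -> W) r : sumW w (comp r) = sumW w r.
Proof.
rewrite /sumW /comp big_map.
transitivity (\sum_(v <- undup [seq p.2 | p <- r])
                \sum_(p <- r) (if p.2 == v then p.1 *: w p.2 else 0)).
  apply: eq_bigr => v _; rewrite /coef scaler_suml big_mkcond.
  by apply: eq_bigr => p _; case: eqP => // ->.
rewrite exchange_big /=; apply: eq_big_seq => p pr.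
rewrite -big_mkcond /= -big_filter.
have -> : [seq v <- undup [seq p0.2 | p0 <- r] | p.2 == v] = [:: p.2].
  rewrite (@eq_filter _ _ (pred1 p.2)); last by move=> v; rewrite /= eq_sym.
  apply: filter_pred1_uniq; first exact: undup_uniq.
  by rewrite mem_undup; apply: map_f.
by rewrite big_seq1.
Qed.

Lemma comp_uniq r : uniq [seq q.2 | q <- comp r].
Proof. by rewrite /comp -map_comp map_id undup_uniq. Qed.

Lemma comp_allS r : allS r -> allS (comp r).
Proof.
by move=> H q /mapP [v]; rewrite mem_undup => /mapP [p pr ->] ->; exact: (H p pr).
Qed.

Lemma conv r : allS r -> uniq [seq q.2 | q <- r] ->
  exists n (s : 'I_n -> V) (c : 'I_n -> K),
    [/\ injective s, (forall i, S (s i)), sumW id r = \sum_(i < n) c i *: s i &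
        forall q, q \in r -> exists i, c i = q.1 /\ s i = q.2].
Proof.
move=> HS Hu.
exists (size r), (fun i => (nth (0,0) r i).2), (fun i => (nth (0,0) r i).1); split.
- move=> i j /= e; apply/val_inj/eqP.
  rewrite -(nth_uniq 0 _ _ Hu) ?size_map ?ltn_ord //.
  by rewrite !(nth_map (0,0)) ?ltn_ord // e.
- by move=> i; apply: HS; rewrite mem_nth.
- by rewrite /sumW (big_nth (0,0)) big_mkord.
- move=> q qr; have hi : (index q r < size r)%N by rewrite index_mem.
  by exists (Ordinal hi); rewrite /= nth_index.
Qed.

Lemma indep r : allS r -> uniq [seq q.2 | q <- r] -> sumW id r = 0 ->
  forall q, q \in r -> q.1 = 0.
Proof.
move=> HS Hu H0 q qr.
have [n [s [c [inj hs hsum hq]]]] := conv HS Hu.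
have [i [<- _]] := hq q qr.
by apply: (proj2 hB n s c inj hs); rewrite -hsum.
Qed.

Lemma orth_ge r q : allS r -> uniq [seq q.2 | q <- r] -> q \in r -> q.1 != 0 ->
  (lV q.2 <= lV (sumW id r))%E.
Proof.
move=> HS Hu qr nz.
have [n [s [c [inj hs hsum hq]]]] := conv HS Hu.
have [i [ci si]] := hq q qr.
rewrite hsum (proj2 hO n s c inj hs) -si.
by apply: (emax_ge (fun i => lV (s i))) => /=; rewrite ci.
Qed.

Lemma zero_rep (W : lmodType K) (w : V -> W) r : allS r -> sumW id r = 0 -> sumW w r = 0.
Proof.
move=> HS H0; rewrite -comp_sum /sumW big_seq big1 // => q qin.
rewrite (indep (comp_allS HS) (comp_uniq r)) ?scale0r //.
by rewrite comp_sum.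
Qed.

Lemma rep_uniq (W : lmodType K) (w : V -> W) r1 r2 : allS r1 -> allS r2 ->
  sumW id r1 = sumW id r2 -> sumW w r1 = sumW w r2.
Proof.
move=> h1 h2 e.
have := @zero_rep W w (r1 ++ scl (-1) r2) (allS_cat h1 (@allS_scl (-1) r2 h2)).
rewrite !sumW_cat !sumW_scl !scaleN1r e subrr => /(_ erefl) /eqP.
by rewrite subr_eq0 => /eqP.
Qed.

Lemma basis_liftable : liftable lV.
Proof.
move=> W Z lW p phi hU hp hphi hex.
pose wf v := proj1_sig (constructive_indefinite_description _ (hex v)).
have wfP v : p (wf v) = phi v /\ (lW (wf v) <= lV v)%E :=
  proj2_sig (constructive_indefinite_description _ (hex v)).
pose rp v := proj1_sig (constructive_indefinite_description _ (rep_ex v)).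
have rpP v : allS (rp v) /\ v = sumW id (rp v) :=
  proj2_sig (constructive_indefinite_description _ (rep_ex v)).
pose psi v := sumW wf (rp v).
have psiE r : allS r -> psi (sumW id r) = sumW wf r.
  move=> hr; rewrite /psi; apply: rep_uniq; [exact (rpP _).1 | exact hr |].
  by rewrite -(rpP _).2.
exists psi; split.
- move=> a x y.
  have -> : a *: x + y = sumW id (scl a (rp x) ++ rp y).
    by rewrite sumW_cat sumW_scl -(rpP x).2 -(rpP y).2.
  by rewrite psiE ?sumW_cat ?sumW_scl //; apply: allS_cat; [apply: allS_scl|]; apply (rpP _).1.
- move=> v; split.
  + rewrite /psi {2}(rpP v).2 /sumW (lin_sum _ _ hp) (lin_sum _ _ hphi).
    by apply: eq_bigr => q _; rewrite (linZ hp) (linZ hphi) (wfP _).1.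
  + rewrite /psi -comp_sum {2}(rpP v).2 -(comp_sum id).
    apply: (ultra_sum (c := fun q => q.1) (x := fun q => wf q.2)) => // q qin nz.
    apply: le_trans (wfP _).2 _.
    by apply: orth_ge => //; [apply: comp_allS; apply (rpP _).1 | apply: comp_uniq].
Qed.
End Basis.
Lemma prod_eq (A B : Type) (x y : A * B) : x.1 = y.1 -> x.2 = y.2 -> x = y.
Proof. by case: x => a b; case: y => c d /= -> ->. Qed.

Section Prod.
Variables (K : fieldType) (R : realType) (V1 V2 : lmodType K)
  (l1 : V1 -> \bar R) (l2 : V2 -> \bar R).

Lemma prod_liftable : liftable l1 -> liftable l2 -> l1 0 = -oo%E -> l2 0 = -oo%E ->
  liftable (fun x : V1 * V2 => maxe (l1 x.1) (l2 x.2)).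
Proof.
move=> L1 L2 z1 z2 W Z lW p phi hU hp hphi hex.
have lin1 : lin (fun c : V1 => phi (c, 0)).
  move=> a x y; rewrite -(hphi a (x, 0) (y, 0)); congr phi.
  by apply: prod_eq => /=; rewrite ?scaler0 ?addr0.
have lin2 : lin (fun c : V2 => phi (0, c)).
  move=> a x y; rewrite -(hphi a (0, x) (0, y)); congr phi.
  by apply: prod_eq => /=; rewrite ?scaler0 ?addr0.
have [psi1 [lp1 hp1]] : exists psi : V1 -> W, lin psi /\
      forall v, p (psi v) = phi (v, 0) /\ (lW (psi v) <= l1 v)%E.
  apply: (L1 W Z lW p _ hU hp lin1) => v.
  by have [w [hw lw]] := hex (v, 0); exists w; split => //; rewrite /= z2 maxeNy in lw.
have [psi2 [lp2 hp2]] : exists psi : V2 -> W, lin psi /\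
      forall v, p (psi v) = phi (0, v) /\ (lW (psi v) <= l2 v)%E.
  apply: (L2 W Z lW p _ hU hp lin2) => v.
  by have [w [hw lw]] := hex (0, v); exists w; split => //; rewrite /= z1 maxNye in lw.
exists (fun x => psi1 x.1 + psi2 x.2); split.
- move=> a x y /=; rewrite lp1 lp2 scalerDr.
  by rewrite -!addrA; congr (_ + _); rewrite addrCA.
- move=> [x1 x2] /=; split.
  + rewrite (linD hp) (hp1 _).1 (hp2 _).1 -(linD hphi); congr phi.
    by apply: prod_eq; rewrite /= ?addr0 ?add0r.
  + case: hU => _ hd _; apply: le_trans (hd _ _) _.
    rewrite ge_max; apply/andP; split; rewrite le_max.
    * by rewrite (hp1 _).2.
    * by rewrite (hp2 _).2 orbT.
Qed.
End Prod.

Definition pick (T : int -> Type) (h : nat -> int) (F : forall m, T (h m))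
    (dflt : forall k, T k) (k : int) : T k :=
  match excluded_middle_informative (exists m, h m = k) with
  | left H => let (m, e) := constructive_indefinite_description _ H in
              eq_rect _ T (F m) _ e
  | right _ => dflt k
  end.

Lemma pick_eq (T : int -> Type) (h : nat -> int) (F : forall m, T (h m))
    (dflt : forall k, T k) m : injective h -> pick F dflt (h m) = F m.
Proof.
move=> hi; rewrite /pick; case: excluded_middle_informative => [H|[]]; last by exists m.
case: (constructive_indefinite_description _ H) => m' e.
have em : m' = m by apply: hi.
subst m'; by rewrite (eq_irrelevance e erefl).
Qed.

Lemma pick_ind (T : int -> Type) (h : nat -> int) (F : forall m, T (h m))
    (dflt : forall k, T k) (P : forall k, T k -> Prop) :
  (forall m, P (h m) (F m)) -> (forall k, P k (dflt k)) -> forall k, P k (pick F dflt k).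
Proof.
move=> HF Hd k; rewrite /pick; case: excluded_middle_informative => [H|_] //.
by case: (constructive_indefinite_description _ H) => m e; case: _ / e.
Qed.

Fixpoint idx (m : nat) : int := match m with 0%N => -2 | m'.+1 => idx m' + 1 end.

Lemma idxE m : idx m = m%:Z - 2.
Proof. elim: m => [|m IH] //=; rewrite IH intS; lia. Qed.

Lemma idx_inj : injective idx.
Proof. move=> a b; rewrite !idxE => e; lia. Qed.

Lemma idxS_inj : injective (fun m => idx m.+1).
Proof. by move=> a b /= /addIr /idx_inj. Qed.

Lemma idx_surj (k : int) : -2 <= k -> exists m, idx m = k.
Proof.
move=> hk; have : 0 <= k + 2 by lia.
case E: (k + 2) => [n|n] // _; exists n; rewrite idxE -E; lia.
Qed.
Unset Implicit Arguments.
Section Contr.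
Variables (K : fieldType) (R : realType) (E : int -> lmodType K)
  (bdE : forall j : int, E (j + 1) -> E j) (lE : forall j, E j -> \bar R).
Hypotheses (Hlin : forall j, lin (bdE j))
  (Hbb : forall j (x : E (j + 1 + 1)), bdE j (bdE (j + 1) x) = 0)
  (Hul : forall j, ultra (lE j))
  (Hbdl : forall j (x : E (j + 1)), (lE j (bdE j x) <= lE (j + 1) x)%E)
  (Hz : forall j : int, j < -1 -> forall x : E j, x = 0)
  (Hac : forall j (z : E (j + 1)), bdE j z = 0 ->
     exists w, bdE (j + 1) w = z /\ (lE (j + 1 + 1) w <= lE (j + 1) z)%E)
  (Hlift : forall j, liftable (lE j)).

Definition Inv j (s : E j -> E (j + 1)) :=
  forall v : E (j + 1), bdE j (s (bdE j v)) = bdE j v.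
Definition good j (s : E j -> E (j + 1)) :=
  [/\ lin s, forall x, (lE (j + 1) (s x) <= lE j x)%E & Inv j s].
Definition Rel j (s : E j -> E (j + 1)) (s' : E (j + 1) -> E (j + 1 + 1)) :=
  forall x : E (j + 1), bdE (j + 1) (s' x) + s (bdE j x) = x.

Lemma step_ex j (s : E j -> E (j + 1)) : good j s -> exists s', good (j + 1) s' /\ Rel j s s'.
Proof.
case=> ls bs Is.
have hphi : lin (fun v : E (j + 1) => v - s (bdE j v)).
  by move=> a x y; rewrite (Hlin j) ls scalerBr opprD addrACA.
have [|s' [ls' hs']] := Hlift (j + 1) (E (j + 1 + 1)) (E (j + 1)) (lE (j + 1 + 1)) (bdE (j + 1)) _ (Hul _) (Hlin (j + 1)) hphi.
  move=> v.
  have cyc : bdE j (v - s (bdE j v)) = 0 by rewrite (linB (Hlin j)) Is subrr.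
  have [w [hw lw]] := Hac _ _ cyc; exists w; split => //.
  apply: le_trans lw _; case: (Hul (j + 1)) => _ hd _.
  apply: le_trans (hd _ _) _; rewrite ge_max lexx /=.
  apply: le_trans (ultraN (Hul _) _) _.
  exact: le_trans (bs _) (Hbdl _ _).
exists s'; split; first split.
- exact: ls'.
- by move=> x; apply (hs' x).2.
- by move=> v; rewrite (hs' _).1 Hbb (lin0 ls) subr0.
- by move=> x; rewrite (hs' x).1 subrK.
Qed.

Definition state m := {s : E (idx m) -> E (idx m + 1) | good (idx m) s}.

Lemma good0 : @good (idx 0) (fun _ => 0).
Proof.
split.
- by move=> a x y; rewrite scaler0 addr0.
- by move=> x; rewrite (ultra0 (Hul _)) leNye.
- move=> v; rewrite (Hz (idx 0) _ (bdE _ v)) //.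
  by apply: Hz.
Qed.

Definition step_fun j (s : E j -> E (j + 1)) (H : good j s) :=
  proj1_sig (constructive_indefinite_description _ (step_ex _ _ H)).

Fixpoint st (m : nat) : state m :=
  match m return state m with
  | 0%N => exist _ _ good0
  | m'.+1 => let: exist s H := st m' in
      exist _ (step_fun _ _ H)
        (proj1 (proj2_sig (constructive_indefinite_description _ (step_ex _ _ H))))
  end.

Lemma st_rel m : Rel (idx m) (proj1_sig (st m)) (proj1_sig (st m.+1)).
Proof.
rewrite /=; case: (st m) => s H /=.
exact: (proj2 (proj2_sig (constructive_indefinite_description _ (step_ex _ _ H)))).
Qed.

Lemma st_good m : good (idx m) (proj1_sig (st m)).
Proof. exact: (proj2_sig (st m)). Qed.
End Contr.
Set Implicit Arguments.
Unset Implicit Arguments.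
Section Cone.
Variables (K : fieldType) (R : realType) (C D : ascending_complex K R)
  (f : forall k : int, {linear obj C k -> obj D k}).
Hypotheses (hC : forall k : int, has_orthogonal_basis (@filt _ _ C k))
  (hD : forall k : int, has_orthogonal_basis (@filt _ _ D k))
  (zC : forall k : int, k < 0 -> forall x : obj C k, x = 0)
  (zD : forall k : int, k < 0 -> forall y : obj D k, y = 0)
  (hf : filtered_chain_map f) (hq : filtered_quasi_iso f).

Lemma filt_noty (X : ascending_complex K R) k (x : obj X k) : filt X k x != +oo%E.
Proof. by case: (filt_ax _ _ X k) => _ h _; apply/eqP; apply: h. Qed.

Lemma filt_ninf (X : ascending_complex K R) k (x : obj X k) : filt X k x = -oo%E -> x = 0.
Proof. by case: (filt_ax _ _ X k) => h _ _; apply: (proj1 (h x)). Qed.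

Lemma uX (X : ascending_complex K R) k : ultra (filt X k).
Proof. exact: ultra_filt (filt_ax _ _ X k). Qed.

Definition cE (j : int) : lmodType K := (obj C j * obj D (j + 1))%type.
Definition cbd (j : int) (x : cE (j + 1)) : cE j :=
  (- bd C j x.1, f (j + 1) x.1 + bd D (j + 1) x.2).
Definition cl (j : int) (x : cE j) : \bar R := maxe (filt C j x.1) (filt D (j + 1) x.2).

Lemma cone_lin j : lin (cbd j).
Proof.
move=> a x y; apply: prod_eq => /=.
  by rewrite linearP opprD scalerN.
by rewrite !linearP scalerDr addrACA.
Qed.

Lemma cone_bb j (x : cE (j + 1 + 1)) : cbd j (cbd (j + 1) x) = 0.
Proof.
apply: prod_eq => /=.
  by rewrite linearN opprK bd_bd.
by rewrite linearN linearD bd_bd addr0 (proj1 hf (j + 1)) addNr.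
Qed.

Lemma cone_ul j : ultra (cl j).
Proof.
have [a0 ad az] := uX C j; have [b0 bd0 bz] := uX D (j + 1).
split.
- by rewrite /cl /= a0 b0 maxeNy.
- move=> a b; rewrite /cl /=; rewrite ge_max; apply/andP; split.
  + apply: le_trans (ad _ _) _; rewrite ge_max !le_max !lexx ?orbT //.
  + apply: le_trans (bd0 _ _) _; rewrite ge_max !le_max !lexx ?orbT //.
- move=> c a; rewrite /cl /= ge_max !le_max.
  by rewrite az bz orbT.
Qed.

Lemma cone_bdl j (x : cE (j + 1)) : (cl j (cbd j x) <= cl (j + 1) x)%E.
Proof.
rewrite /cl /= ge_max; apply/andP; split.
  rewrite le_max; apply/orP; left.
  apply: le_trans (ultraN (uX C j) _) _; exact: filt_bd.
have [_ hd _] := uX D (j + 1).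
apply: le_trans (hd _ _) _; rewrite ge_max; apply/andP; split.
  by rewrite le_max (le_trans (proj2 hf _ _) (lexx _)).
by rewrite le_max (filt_bd _ _ D) orbT.
Qed.

Lemma cone_z j : j < -1 -> forall x : cE j, x = 0.
Proof.
move=> hj x; apply: prod_eq => /=.
  by apply: zC; lia.
by apply: zD; lia.
Qed.

Lemma cone_lift j : liftable (cl j).
Proof.
have [S1 [b1 o1]] := hC j; have [S2 [b2 o2]] := hD (j + 1).
exact: (prod_liftable (basis_liftable b1 o1) (basis_liftable b2 o2)
          (ultra0 (uX C j)) (ultra0 (uX D (j + 1)))).
Qed.

Lemma cone_ac j (z : cE (j + 1)) : cbd j z = 0 ->
  exists w, cbd (j + 1) w = z /\ (cl (j + 1 + 1) w <= cl (j + 1) z)%E.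
Proof.
case: z => c d e.
have e1 : bd C j c = 0.
  by have := congr1 fst e => /= /eqP; rewrite oppr_eq0 => /eqP.
have e2 : f (j + 1) c + bd D (j + 1) d = 0 := congr1 snd e.
case: (eqVneq (cl (j + 1) (c, d)) -oo%E) => [lz|lz].
  have hc : filt C (j + 1) c = -oo%E.
    by apply/eqP; rewrite -leeNy_eq -lz /cl /= le_max lexx.
  have hd : filt D (j + 1 + 1) d = -oo%E.
    by apply/eqP; rewrite -leeNy_eq -lz /cl /= le_max lexx orbT.
  rewrite (filt_ninf _ _ _ hc) (filt_ninf _ _ _ hd).
  exists 0; split.
    by rewrite (lin0 (cone_lin _)); apply: prod_eq.
  by rewrite (ultra0 (cone_ul _)) leNye.
have fz : cl (j + 1) (c, d) \is a fin_num.
  rewrite fin_numE lz /= -ltey /cl /= gt_max !ltey !filt_noty //.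
set t := fine (cl (j + 1) (c, d)).
have Et : cl (j + 1) (c, d) = t%:E by rewrite fineK.
have hct : (filt C (j + 1) c <= t%:E)%E by rewrite -Et /cl /= le_max lexx.
have hdt : (filt D (j + 1 + 1) d <= t%:E)%E by rewrite -Et /cl /= le_max lexx orbT.
have [w' [hw't ec]] : exists w : obj C (j + 1 + 1),
    (filt C (j + 1 + 1) w <= t%:E)%E /\ c = bd C (j + 1) w.
  apply: (proj2 (hq j t) c hct e1); exists (- d); split.
    exact: le_trans (ultraN (uX D _) _) hdt.
  by rewrite linearN; apply/eqP; rewrite -addr_eq0; apply/eqP.
subst c.
pose y := d + f (j + 1 + 1) w'.
have hy : (filt D (j + 1 + 1) y <= t%:E)%E.
  have [_ hdd _] := uX D (j + 1 + 1).
  apply: le_trans (hdd _ _) _; rewrite ge_max hdt /=.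
  exact: le_trans (proj2 hf _ _) hw't.
have cy : bd D (j + 1) y = 0.
  by rewrite linearD -(proj1 hf (j + 1) w') [LHS]addrC.
have [x [hxt hx0 [z' [hz't hz']]]] := proj1 (hq (j + 1) t) y hy cy.
exists (x - w', z'); split.
  apply: prod_eq => /=.
    by rewrite linearB hx0 sub0r opprK.
  by rewrite -hz' /y linearB [LHS]addrC [LHS]addrA subrK addrK.
rewrite Et /cl /= ge_max hz't andbT.
have [_ hcc _] := uX C (j + 1 + 1).
apply: le_trans (hcc _ _) _; rewrite ge_max hxt /=.
exact: le_trans (ultraN (uX C _) _) hw't.
Qed.
End Cone.
Lemma rearr1 (V : zmodType) (a b c y : V) : c + a + b = y -> a + b = y - c.
Proof. by move=> <-; rewrite -[c + a + b]addrA [c + (a + b)]addrC addrK. Qed.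

Lemma rearr2 (V : zmodType) (a b c x : V) : a + (b + c) = x -> a + b = x - c.
Proof. by move=> <-; rewrite addrA addrK. Qed.

Lemma rearr3 (V : zmodType) (a b : V) : - b + a = 0 -> a = b.
Proof. by move/eqP; rewrite addrC subr_eq0 => /eqP. Qed.

Theorem proposition4p2 (kappa : fieldType) (R : realType)
    (C D : ascending_complex kappa R) :
  (forall k : int, has_orthogonal_basis (@filt _ _ C k)) ->
  (forall k : int, has_orthogonal_basis (@filt _ _ D k)) ->
  (forall k : int, k < 0 -> forall x : obj C k, x = 0) ->
  (forall k : int, k < 0 -> forall y : obj D k, y = 0) ->
  forall f : forall k : int, {linear obj C k -> obj D k},
    filtered_chain_map f -> filtered_quasi_iso f ->
    filtered_homotopy_equiv f.
Proof.
move=> hC hD zC zD f hf hq.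
pose sg := st _ _ _ _ _ (cone_lin _ _ C D f) (cone_bb _ _ C D f hf) (cone_ul _ _ C D)
  (cone_bdl _ _ C D f hf) (cone_z _ _ C D zC zD) (cone_ac _ _ C D f hf hq)
  (cone_lift _ _ C D hC hD).
pose sig m := proj1_sig (sg m).
have rel m : Rel _ _ (cbd _ _ C D f) (idx m) (sig m) (sig m.+1) :=
  st_rel _ _ _ _ _ _ _ _ _ _ _ _ m.
have gd m : good _ _ _ (cbd _ _ C D f) (cl _ _ C D) (idx m) (sig m) :=
  st_good _ _ _ _ _ _ _ _ _ _ _ _ m.
pose KCf := @pick (fun k => obj C k -> obj C (k + 1)) idx
  (fun m c => - (sig m (c, 0)).1) (fun k _ => 0).
pose gf := @pick (fun k => obj D k -> obj C k) (fun m => idx m.+1)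
  (fun m d => (sig m (0, d)).1) (fun k _ => 0).
pose KDf := @pick (fun k => obj D k -> obj D (k + 1)) (fun m => idx m.+1)
  (fun m d => (sig m (0, d)).2) (fun k _ => 0).
have KCE m : KCf (idx m) = (fun c => - (sig m (c, 0)).1) := pick_eq _ _ _ idx_inj.
have gE m : gf (idx m.+1) = (fun d => (sig m (0, d)).1) := pick_eq _ _ _ idxS_inj.
have KDE m : KDf (idx m.+1) = (fun d => (sig m (0, d)).2) := pick_eq _ _ _ idxS_inj.

have lKC k : lin (KCf k).
  apply: (@pick_ind (fun k => obj C k -> obj C (k + 1)) idx _ _
            (fun k (phi : obj C k -> obj C (k + 1)) => lin phi)) => [m|{}k].
    have [ls _ _] := gd m; move=> a x y /=.
    have -> : ((a *: x + y, 0) : cE _ _ C D (idx m)) = a *: (x, 0) + (y, 0).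
      by apply: prod_eq; rewrite /= ?scaler0 ?addr0.
    by rewrite ls /= opprD scalerN.
  by move=> a x y; rewrite scaler0 addr0.
have lg k : lin (gf k).
  apply: (@pick_ind (fun k => obj D k -> obj C k) (fun m => idx m.+1) _ _
            (fun k (phi : obj D k -> obj C k) => lin phi)) => [m|{}k].
    have [ls _ _] := gd m; move=> a x y /=.
    have -> : ((0, a *: x + y) : cE _ _ C D (idx m)) = a *: (0, x) + (0, y).
      by apply: prod_eq; rewrite /= ?scaler0 ?addr0.
    by rewrite ls.
  by move=> a x y; rewrite scaler0 addr0.
have lKD k : lin (KDf k).
  apply: (@pick_ind (fun k => obj D k -> obj D (k + 1)) (fun m => idx m.+1) _ _
            (fun k (phi : obj D k -> obj D (k + 1)) => lin phi)) => [m|{}k].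
    have [ls _ _] := gd m; move=> a x y /=.
    have -> : ((0, a *: x + y) : cE _ _ C D (idx m)) = a *: (0, x) + (0, y).
      by apply: prod_eq; rewrite /= ?scaler0 ?addr0.
    by rewrite ls.
  by move=> a x y; rewrite scaler0 addr0.

have bKC k x : (filt C (k + 1) (KCf k x) <= filt C k x)%E.
  move: x; apply: (@pick_ind (fun k => obj C k -> obj C (k + 1)) idx _ _
     (fun k (phi : obj C k -> obj C (k + 1)) => forall x, (filt C (k + 1) (phi x) <= filt C k x)%E)) => [m|{}k] x.
    have [_ bs _] := gd m.
    apply: le_trans (ultraN (uX _ _ C _) _) _.
    have := bs (x, 0); rewrite /cl /= (ultra0 (uX _ _ D _)) maxeNy.
    by apply: le_trans; rewrite le_max lexx.
  by rewrite (ultra0 (uX _ _ C _)) leNye.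
have bg k x : (filt C k (gf k x) <= filt D k x)%E.
  move: x; apply: (@pick_ind (fun k => obj D k -> obj C k) (fun m => idx m.+1) _ _
     (fun k (phi : obj D k -> obj C k) => forall x, (filt C k (phi x) <= filt D k x)%E)) => [m|{}k] x.
    have [_ bs _] := gd m.
    have := bs (0, x); rewrite /cl /= (ultra0 (uX _ _ C _)) maxNye.
    by apply: le_trans; rewrite le_max lexx.
  by rewrite (ultra0 (uX _ _ C _)) leNye.
have bKD k x : (filt D (k + 1) (KDf k x) <= filt D k x)%E.
  move: x; apply: (@pick_ind (fun k => obj D k -> obj D (k + 1)) (fun m => idx m.+1) _ _
     (fun k (phi : obj D k -> obj D (k + 1)) => forall x, (filt D (k + 1) (phi x) <= filt D k x)%E)) => [m|{}k] x.
    have [_ bs _] := gd m.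
    have := bs (0, x); rewrite /cl /= (ultra0 (uX _ _ C _)) maxNye.
    by apply: le_trans; rewrite le_max lexx orbT.
  by rewrite (ultra0 (uX _ _ D _)) leNye.

have cb0 m (y : obj D (idx m + 1 + 1)) :
    cbd _ _ C D f (idx m) (0, y) = (0, bd D (idx m + 1) y).
  by apply: prod_eq; rewrite /= ?linear0 ?oppr0 ?add0r.
split=> //.
exists (fun k => mklin (lg k)), (fun k => mklin (lKC k)), (fun k => mklin (lKD k)).
split.
- split=> k x; rewrite /mklin /=; last exact: bg.
  case: (ltP k (-1)) => hk.
    have hk' : k < 0 by lia.
    by rewrite [LHS](zC _ hk') [RHS](zC _ hk').
  have [[|m] em] := idx_surj (k := k) ltac:(lia).
    by exfalso; move: hk; rewrite -em /=; lia.
  subst k; rewrite (gE m) (gE m.+1) /=.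
  have := congr1 fst (rel m (0, x)); rewrite cb0 /= => e.
  exact: rearr3 e.
- by move=> k x; rewrite /mklin /=; apply: bKC.
- by move=> k x; rewrite /mklin /=; apply: bKD.
- move=> k x; rewrite /mklin /=.
  case: (ltP k (-2)) => hk.
    have hk' : k + 1 < 0 by lia.
    by rewrite [LHS](zC _ hk') [RHS](zC _ hk').
  have [m em] := idx_surj (k := k) ltac:(lia).
  subst k; rewrite (KCE m) (KCE m.+1) (gE m) /=.
  have [ls _ _] := gd m.
  have ce : cbd _ _ C D f (idx m) (x, 0) = - (bd C (idx m) x, 0) + (0, f (idx m + 1) x).
    by apply: prod_eq; rewrite /= ?linear0 ?oppr0 ?addr0 ?add0r.
  have := congr1 fst (rel m (x, 0)); rewrite ce (linD ls) (linN ls) /= => e.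
  by rewrite linearN; apply: rearr2 e.
- move=> k x; rewrite /mklin /=.
  case: (ltP k (-1)) => hk.
    have hk' : k + 1 < 0 by lia.
    by rewrite [LHS](zD _ hk') [RHS](zD _ hk').
  have [[|m] em] := idx_surj (k := k) ltac:(lia).
    by exfalso; move: hk; rewrite -em /=; lia.
  subst k; rewrite (KDE m) (KDE m.+1) (gE m.+1) /=.
  have := congr1 snd (rel m (0, x)); rewrite cb0 /= => e.
  exact: rearr1 e.
Qed.
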